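(* Let $t\mapsto\zeta(t)=(\xi(t),\eta(t),s(t))$, $t\in I$, be a solution of the relaxed system (R) such that for all $t\in I$: $\epsilon(t)\neq0$, $n^j(t)\neq0$ and $\partial_Tf_{\mathrm{hl}}(T^j(t),\mathbf x^j(t))\neq0$ for $j=1,\dots,S$, and $f_{\mathrm{holdup}}'(L^j(t))\neq0$ for $j=1,\dots,S-1$. Then the Jacobian $D_{(\eta,s)}g(\zeta(t))$ is non-singular for every $t\in I$ if and only if $s^1(t),\dots,s^S(t)\neq0$ for every $t\in I$.
   Context: Fix integers $S\ge 2$, $C\ge 2$ and an interval $I\subset\mathbb R$. Given are continuously differentiable real functions $f_{\mathrm{vle},i}(P,T,\mathbf x)$ ($i=1,\dots,C$), $f_{\mathrm{hl}}(T,\mathbf x)$, $f_{\mathrm{hv}}(T,\mathbf y)$, $f_{\mathrm{holdup}}(L)$. Controls are continuously differentiable real functions $\epsilon,P,Q,T^{\mathrm{cond}}$ on $I$. State variables: $n^j,H^j,T^j,V^j,s^j$, $\mathbf x^j,\mathbf y^j\in\mathbb R^C$ ($j=1,\dots,S$), $L^j$ ($j=1,\dots,S-1$); a solution is a tuple of continuously differentiable state functions satisfying all equations at every $t\in I$. ''$2\le j\le S-1$'' marks middle-stage equations. The relaxed system (R) consists of: (TM) $\dot n^1=L^1-V^1$; $\dot n^j=L^j-V^j-L^{j-1}+V^{j-1}$ ($2\le j\le S-1$); $\dot n^S=-\epsilon V^S-L^{S-1}+V^{S-1}$; (CM$_0$) for $i=1,\dots,C-1$: $\dot x_i^1=\big(L^1(x_i^2-x_i^1)-V^1(y_i^1-x_i^1)\big)/n^1$;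 $\dot x_i^j=\big(L^j(x_i^{j+1}-x_i^j)-V^j(y_i^j-x_i^j)+V^{j-1}(y_i^{j-1}-x_i^j)\big)/n^j$ ($2\le j\le S-1$); $\dot x_i^S=\big(\epsilon V^S(x_i^S-y_i^S)+V^{S-1}(y_i^{S-1}-x_i^S)\big)/n^S$; (EB) $\dot H^1=L^1f_{\mathrm{hl}}(T^2,\mathbf x^2)-V^1f_{\mathrm{hv}}(T^1,\mathbf y^1)+Q$; $\dot H^j=L^jf_{\mathrm{hl}}(T^{j+1},\mathbf x^{j+1})-V^jf_{\mathrm{hv}}(T^j,\mathbf y^j)-L^{j-1}f_{\mathrm{hl}}(T^j,\mathbf x^j)+V^{j-1}f_{\mathrm{hv}}(T^{j-1},\mathbf y^{j-1})$ ($2\le j\le S-1$); $\dot H^S=(1-\epsilon)V^Sf_{\mathrm{hl}}(T^{\mathrm{cond}},\mathbf y^S)-V^Sf_{\mathrm{hv}}(T^S,\mathbf y^S)-L^{S-1}f_{\mathrm{hl}}(T^S,\mathbf x^S)+V^{S-1}f_{\mathrm{hv}}(T^{S-1},\mathbf y^{S-1})$; and the algebraic equations $g=0$, with $\mathrm{aux}^1_0=\sum_{i=1}^C\big(L^1(x_i^2-x_i^1)-V^1(y_i^1-x_i^1)\big)/n^1$; for $2\le j\le S-1$, $\mathrm{aux}^j_0=\sum_{i=1}^C\big(L^j(x_i^{j+1}-x_i^j)-V^j(y_i^j-x_i^j)+V^{j-1}(y_i^{j-1}-x_i^j)\big)/n^j$; $\mathrm{aux}^S_0=\sum_{i=1}^C\big(\epsilon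 V^S(x_i^S-y_i^S)+V^{S-1}(y_i^{S-1}-x_i^S)\big)/n^S$; $\mathrm{slack}^j=\sum_{i=1}^Cy_i^j-1-s^j$; $\mathrm{ydef}_i^j=y_i^j-f_{\mathrm{vle},i}(P,T^j,\mathbf x^j)$, $\mathbf{ydef}^j=(\mathrm{ydef}_1^j,\dots,\mathrm{ydef}_C^j)$; $\mathrm{edef}^j=H^j-n^jf_{\mathrm{hl}}(T^j,\mathbf x^j)$; $\mathrm{xsum}^j=x_C^j-1+\sum_{i=1}^{C-1}x_i^j$; $\mathrm{hold}^j=n^j-f_{\mathrm{holdup}}(L^{j-1})$ ($j=2,\dots,S$); collected as $g=(\mathrm{aux}^S_0,\dots,\mathrm{aux}^1_0,\mathrm{slack}^1,\dots,\mathrm{slack}^S,\mathbf{ydef}^1,\dots,\mathbf{ydef}^S,\mathrm{edef}^1,\dots,\mathrm{edef}^S,\mathrm{xsum}^1,\dots,\mathrm{xsum}^S,\mathrm{hold}^2,\dots,\mathrm{hold}^S)$. Differential variables $\xi=(n^1,\dots,n^S,\hat{\mathbf x}^1,\dots,\hat{\mathbf x}^S,H^1,\dots,H^S)$, $\hat{\mathbf x}^j=(x^j_1,\dots,x^j_{C-1})$; algebraic variables $(\eta,s)=(V^S,\dots,V^1,s^1,\dots,s^S,\mathbf y^1,\dots,\mathbf y^S,T^1,\dots,T^S,x_C^1,\dots,x_C^S,L^1,\dots,L^{S-1})$. $D_{(\eta,s)}g$ is the Jacobian of $g$ with respect to $(\eta,s)$ (with $\xi$ and controls held fixed). *)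

(* Defs.v *)
From mathcomp Require Import all_boot all_order all_algebra.
From mathcomp Require Import all_classical all_reals all_analysis.
Set Implicit Arguments. Unset Strict Implicit. Unset Printing Implicit Defensive.
Import Order.TTheory GRing.Theory Num.Theory.
Import numFieldNormedType.Exports.
Local Open Scope classical_set_scope.
Local Open Scope ring_scope.

Section Defs.
Variable R : realType.

(** nat-indexed (0-based) access to vectors/matrices; 0 out of range. *)
Definition vat n (v : 'rV[R]_n) (k : nat) : R :=
  if insub k is Some i then v ord0 i else 0.
Definition mat m n (M : 'M[R]_(m, n)) (a b : nat) : R :=
  if insub a is Some i then (if insub b is Some j then M i j else 0) else 0.

Definition deriv_on (I : set R) (f f' : R -> R) : Prop :=
  forall t, I t ->
    cvg_to ((fun h : R => h^-1 * (f (t + h) - f t)) @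
              within (fun h : R => h != 0 /\ I (t + h)) (nbhs (0 : R)))
           (nbhs (f' t)).

Definition C1_on (I : set R) (f : R -> R) : Prop :=
  exists f' : R -> R, deriv_on I f f' /\ {within I, continuous f'}.

Definition C1 (U V : normedModType R) (f : U -> V) : Prop :=
  (forall p, differentiable f p) /\ (forall v : U, continuous (fun p => 'd f p v)).

(** Space of algebraic variables (eta, s):
    (V, s, y, T, x_C, L) with V,s,T,x_C in R^S, y in R^(S x C) (row j-1 = y^j),
    L in R^(S-1).  Stage j (1-based) is stored at index j-1. *)
Definition Alg (S C : nat) :=
  ('rV[R]_S * 'rV[R]_S * 'M[R]_(S, C) * 'rV[R]_S * 'rV[R]_S * 'rV[R]_(S.-1))%type.
(** Space of algebraic equations:
    (aux_0, slack, ydef, edef, xsum, hold), hold^j (j = 2..S) stored at index j-2. *)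
Definition Eqs (S C : nat) :=
  ('rV[R]_S * 'rV[R]_S * 'M[R]_(S, C) * 'rV[R]_S * 'rV[R]_S * 'rV[R]_(S.-1))%type.

Variables (S C : nat).
Variable f_vle : nat -> (R * R * 'rV[R]_C)%type -> R.   (* f_vle,i(P,T,x), i = 1..C *)
Variable f_hl : (R * 'rV[R]_C)%type -> R.
Variable f_hv : (R * 'rV[R]_C)%type -> R.
Variable f_holdup : R -> R.

(** The algebraic part g of system (R), as a function of the algebraic
    variables z = (eta, s), with the differential variables xi = (n, x^, H)
    and the controls eps, P held fixed.
    n j, H j (j = 1..S) and xh j i (j = 1..S, i = 1..C-1) are the values of the
    differential variables (xh j C is never used: x_C^j is algebraic). *)
Definition galg (n : nat -> R) (xh : nat -> nat -> R) (H : nat -> R)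
    (eps P : R) (z : Alg S C) : Eqs S C :=
  let: (Vv, sv, ym, Tv, xCv, Lv) := z in
  let V j := vat Vv j.-1 in
  let s j := vat sv j.-1 in
  let T j := vat Tv j.-1 in
  let L j := vat Lv j.-1 in
  let y j i := mat ym j.-1 i.-1 in
  let x j i := if i == C then vat xCv j.-1 else xh j i in
  let xr j := \row_(i < C) x j i.+1 in
  let yr j := \row_(i < C) y j i.+1 in
  let aux j :=
    if j == 1%N then
      (\sum_(i < C) (L 1 * (x 2 i.+1 - x 1 i.+1) - V 1 * (y 1 i.+1 - x 1 i.+1))) / n 1
    else if j == S then
      (\sum_(i < C) (eps * V S * (x S i.+1 - y S i.+1)
                      + V S.-1 * (y S.-1 i.+1 - x S i.+1))) / n S
    else
      (\sum_(i < C) (L j * (x j.+1 i.+1 - x j i.+1) - V j * (y j i.+1 - x j i.+1)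
                      + V j.-1 * (y j.-1 i.+1 - x j i.+1))) / n j in
  ( \row_(k < S) aux k.+1,
    \row_(k < S) (\sum_(i < C) y k.+1 i.+1 - 1 - s k.+1),
    \matrix_(k < S, i < C) (y k.+1 i.+1 - f_vle i.+1 (P, T k.+1, xr k.+1)),
    \row_(k < S) (H k.+1 - n k.+1 * f_hl (T k.+1, xr k.+1)),
    \row_(k < S) (x k.+1 C - 1 + \sum_(i < C | (i < C.-1)%N) x k.+1 i.+1),
    \row_(k < S.-1) (n k.+2 - f_holdup (L k.+1)) ).

Definition zeta_alg (V s T L : nat -> R -> R) (x y : nat -> nat -> R -> R) (t : R)
    : Alg S C :=
  ( \row_(k < S) V k.+1 t, \row_(k < S) s k.+1 t,
    \matrix_(k < S, i < C) y k.+1 i.+1 t, \row_(k < S) T k.+1 t,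
    \row_(k < S) x k.+1 C t, \row_(k < S.-1) L k.+1 t ).

Definition solution_R (I : set R) (eps P Q Tcond : R -> R)
    (n H T V s : nat -> R -> R) (x y : nat -> nat -> R -> R) (L : nat -> R -> R)
    : Prop :=
  let xr j t := \row_(i < C) x j i.+1 t in
  let yr j t := \row_(i < C) y j i.+1 t in
  (forall j, (1 <= j <= S)%N ->
     [/\ C1_on I (n j), C1_on I (H j), C1_on I (T j), C1_on I (V j) & C1_on I (s j)])
  /\ (forall j i, (1 <= j <= S)%N -> (1 <= i <= C)%N -> C1_on I (x j i) /\ C1_on I (y j i))
  /\ (forall j, (1 <= j <= S.-1)%N -> C1_on I (L j))
  /\ deriv_on I (n 1%N) (fun t => L 1%N t - V 1%N t)
  /\ (forall j, (2 <= j <= S.-1)%N ->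
        deriv_on I (n j) (fun t => L j t - V j t - L j.-1 t + V j.-1 t))
  /\ deriv_on I (n S) (fun t => - eps t * V S t - L S.-1 t + V S.-1 t)
  /\ (forall i, (1 <= i <= C.-1)%N ->
     [/\ deriv_on I (x 1%N i) (fun t =>
            (L 1%N t * (x 2%N i t - x 1%N i t) - V 1%N t * (y 1%N i t - x 1%N i t))
              / n 1%N t),
         (forall j, (2 <= j <= S.-1)%N ->
            deriv_on I (x j i) (fun t =>
              (L j t * (x j.+1 i t - x j i t) - V j t * (y j i t - x j i t)
                 + V j.-1 t * (y j.-1 i t - x j i t)) / n j t))
       & deriv_on I (x S i) (fun t =>
            (eps t * V S t * (x S i t - y S i t) + V S.-1 t * (y S.-1 i t - x S i t))
              / n S t)])
  /\ deriv_on I (H 1%N) (fun t =>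
        L 1%N t * f_hl (T 2%N t, xr 2%N t) - V 1%N t * f_hv (T 1%N t, yr 1%N t) + Q t)
  /\ (forall j, (2 <= j <= S.-1)%N ->
        deriv_on I (H j) (fun t =>
          L j t * f_hl (T j.+1 t, xr j.+1 t) - V j t * f_hv (T j t, yr j t)
          - L j.-1 t * f_hl (T j t, xr j t) + V j.-1 t * f_hv (T j.-1 t, yr j.-1 t)))
  /\ deriv_on I (H S) (fun t =>
        (1 - eps t) * V S t * f_hl (Tcond t, yr S t) - V S t * f_hv (T S t, yr S t)
        - L S.-1 t * f_hl (T S t, xr S t) + V S.-1 t * f_hv (T S.-1 t, yr S.-1 t))
  /\ (forall t, I t ->
        galg (fun j => n j t) (fun j i => x j i t) (fun j => H j t) (eps t) (P t)
             (zeta_alg V s T L x y t) = 0).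

End Defs.

(* Main.v *)
From HB Require Import structures.
Require Import Defs.
From mathcomp Require Import all_boot all_order all_algebra.
From mathcomp Require Import all_classical all_reals all_analysis.
From mathcomp Require Import ring lra zify.
Set Implicit Arguments. Unset Strict Implicit. Unset Printing Implicit Defensive.
Import Order.TTheory GRing.Theory Num.Theory.
Import numFieldNormedType.Exports.
Local Open Scope ring_scope.


Section Gen.
Context {R : realType}.

Lemma dsum (U : normedModType R) m (e : 'I_m -> U -> R) p :
  (forall i, differentiable (e i) p) ->
  differentiable (fun z => \sum_(i < m) e i z) p.
Proof. by move=> h; rewrite -fct_sumE; apply: differentiable_sum. Qed.

Lemma dsumP (U : normedModType R) m (P : pred 'I_m) (e : 'I_m -> U -> R) p :
  (forall i, P i -> differentiable (e i) p) ->
  differentiable (fun z => \sum_(i < m | P i) e i z) p.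
Proof.
move=> h.
have -> : (fun z => \sum_(i < m | P i) e i z) =
          (fun z => \sum_(i < m) (if P i then e i z else 0)).
  by apply: funext => z; rewrite big_mkcond.
apply: dsum => i /=; case Pi: (P i); [exact: h | exact: differentiable_cst].
Qed.

Lemma dmul (U : normedModType R) (a b : U -> R) p :
  differentiable a p -> differentiable b p -> differentiable (fun z => a z * b z) p.
Proof. move=> ha hb; exact: (differentiableM ha hb). Qed.
Lemma dadd (U : normedModType R) (W : normedModType R) (a b : U -> W) p :
  differentiable a p -> differentiable b p -> differentiable (fun z => a z + b z) p.
Proof. move=> ha hb; exact: (differentiableD ha hb). Qed.
Lemma dsub (U : normedModType R) (W : normedModType R) (a b : U -> W) p :
  differentiable a p -> differentiable b p -> differentiable (fun z => a z - b z) p.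
Proof. move=> ha hb; exact: (differentiableB ha hb). Qed.
Lemma daddR (U : normedModType R) (a b : U -> R) p :
  differentiable a p -> differentiable b p -> differentiable (fun z => a z + b z) p.
Proof. move=> ha hb; exact: (differentiableD ha hb). Qed.
Lemma dsubR (U : normedModType R) (a b : U -> R) p :
  differentiable a p -> differentiable b p -> differentiable (fun z => a z - b z) p.
Proof. move=> ha hb; exact: (differentiableB ha hb). Qed.
Lemma dNR (U : normedModType R) (a : U -> R) p :
  differentiable a p -> differentiable (fun z => - a z) p.
Proof. move=> ha; exact: (differentiableN ha). Qed.
Lemma dcst (U : normedModType R) (W : normedModType R) (c : W) (p : U) :
  differentiable (fun _ : U => c) p.
Proof. exact: differentiable_cst. Qed.

Lemma fst_linear (A B : normedModType R) : linear (@fst A B).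
Proof. by []. Qed.
Lemma snd_linear (A B : normedModType R) : linear (@snd A B).
Proof. by []. Qed.

Definition fstL (A B : normedModType R) : {linear (A * B)%type -> A} :=
  HB.pack (@fst A B) (GRing.isLinear.Build _ _ _ _ (@fst A B) (@fst_linear A B)).
Definition sndL (A B : normedModType R) : {linear (A * B)%type -> B} :=
  HB.pack (@snd A B) (GRing.isLinear.Build _ _ _ _ (@snd A B) (@snd_linear A B)).

Lemma fst_cont (A B : normedModType R) : continuous (fstL A B).
Proof. move=> x; exact: cvg_fst. Qed.
Lemma snd_cont (A B : normedModType R) : continuous (sndL A B).
Proof. move=> x; exact: cvg_snd. Qed.

Lemma dfst (U A B : normedModType R) (G : U -> A * B) p :
  differentiable G p -> differentiable (fun z => (G z).1) p /\
  forall v, 'd (fun z => (G z).1) p v = ('d G p v).1.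
Proof.
move=> hG.
have e : (fun z => (G z).1) = fstL A B \o G by [].
have hf : differentiable (fstL A B) (G p) by apply: linear_differentiable; exact: fst_cont.
split; first by rewrite e; apply: differentiable_comp.
move=> v; rewrite e diff_comp // /comp diff_lin //; exact: fst_cont.
Qed.

Lemma dsnd (U A B : normedModType R) (G : U -> A * B) p :
  differentiable G p -> differentiable (fun z => (G z).2) p /\
  forall v, 'd (fun z => (G z).2) p v = ('d G p v).2.
Proof.
move=> hG.
have e : (fun z => (G z).2) = sndL A B \o G by [].
have hf : differentiable (sndL A B) (G p) by apply: linear_differentiable; exact: snd_cont.
split; first by rewrite e; apply: differentiable_comp.
move=> v; rewrite e diff_comp // /comp diff_lin //; exact: snd_cont.
Qed.

Lemma coord_linear m n (i : 'I_m) (j : 'I_n) : linear (fun N : 'M[R]_(m, n) => N i j).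
Proof. by move=> a u w; rewrite !mxE. Qed.
Definition coordL m n i j : {linear 'M[R]_(m, n) -> R^o} :=
  HB.pack (fun N : 'M[R]_(m, n) => N i j)
   (GRing.isLinear.Build _ _ _ _ _ (@coord_linear m n i j)).

Lemma dcoord (U : normedModType R) m n (G : U -> 'M[R]_(m, n)) p i j :
  differentiable G p -> differentiable (fun z => G z i j) p /\
  forall v, 'd (fun z => G z i j) p v = 'd G p v i j.
Proof.
move=> hG.
have e : (fun z => G z i j) = coordL i j \o G by [].
have hc : continuous (coordL i j) by exact: coord_continuous.
have hf : differentiable (coordL i j) (G p) by apply: linear_differentiable.
split; first by rewrite e; apply: differentiable_comp.
by move=> v; rewrite e diff_comp // /comp diff_lin.
Qed.

Lemma dmx (U : normedModType R) m n (G : U -> 'M[R]_(m, n)) p :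
  (forall i j, differentiable (fun z => G z i j) p) -> differentiable G p.
Proof.
move=> h.
have -> : G = fun z => \sum_(i < m) \sum_(j < n) (G z i j *: delta_mx i j).
  by apply: funext => z; rewrite {1}(matrix_sum_delta (G z)).
rewrite -fct_sumE; apply: differentiable_sum => i.
rewrite -fct_sumE; apply: differentiable_sum => j.
exact: differentiableZl.
Qed.

Lemma dpair (U A B : normedModType R) (f : U -> A) (g : U -> B) p :
  differentiable f p -> differentiable g p -> differentiable (fun z => (f z, g z)) p.
Proof. exact: differentiable_pair. Qed.

Lemma deriv_dir (U : normedModType R) (W : normedModType R) (f : U -> W) p v :
  'D_v f p = derive1 (fun h : R => f (h *: v + p)) 0.
Proof.
rewrite derive1E /derive /=.
rewrite scale0r add0r.
by under [in RHS]eq_fun do rewrite addr0 [_%:A]mulr1.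
Qed.

Lemma derive1_affine (phi : R -> R) a b x :
  (forall h, phi h = a + h * b) -> derive1 phi x = b.
Proof.
move=> e; rewrite /derive1; apply: cvg_lim => //; apply: cvg_near_cst.
near=> h; rewrite !e.
have h0 : h != 0 by near: h; exact: nbhs_dnbhs_neq.
rewrite [X in _ *: X](_ : _ = h * b); last by ring.
by rewrite -[LHS]/(h^-1 * (h * b)) mulKf.
Unshelve. all: by end_near.
Qed.

Lemma diff_affine (phi : R -> R) a b x :
  (forall h, phi h = a + h * b) -> differentiable phi x.
Proof.
move=> e; have -> : phi = (fun h => a + h * b) by apply: funext.
apply: dadd; first exact: dcst. apply: dmul; last exact: dcst.
by apply/derivable1_diffP; exact: derivable_id.
Qed.

Lemma derive1_chain (f : R -> R) a c k d :
  differentiable f a ->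
  derive1 (fun h => c - k * f (h * d + a)) 0 = - k * (d * derive1 f a).
Proof.
move=> hf.
pose aff := fun h : R => h * d + a.
pose psi := fun y : R => c - k * y.
have Eaff : forall h, aff h = a + h * d by move=> h; rewrite /aff addrC.
have Epsi : forall h, psi h = c + h * (- k) by move=> h; rewrite /psi mulrN mulrC.
have daff : differentiable aff 0 by exact: (diff_affine _ Eaff).
have a0 : aff 0 = a by rewrite /aff mul0r add0r.
have dfa : differentiable (f \o aff) 0 by apply: differentiable_comp => //; rewrite a0.
have -> : (fun h => c - k * f (h * d + a)) = psi \o (f \o aff) by [].
rewrite derive1_comp; last first.
- apply/derivable1_diffP; exact: (diff_affine _ Epsi).
- exact/derivable1_diffP.
rewrite (derive1_affine _ Epsi) derive1_comp; last first.
- by apply/derivable1_diffP; rewrite a0.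
- exact/derivable1_diffP.
by rewrite (derive1_affine _ Eaff) a0 (mulrC (derive1 f a)).
Qed.

End Gen.



Section Spec.
Variable R : realType.
Variables (S C : nat).
Variable f_vle : nat -> (R * R * 'rV[R]_C)%type -> R.
Variable f_hl : (R * 'rV[R]_C)%type -> R.
Variable f_holdup : R -> R.
Variables (nn : nat -> R) (xh : nat -> nat -> R) (HH : nat -> R) (e P0 : R).

Definition zV (z : Alg R S C) j := vat z.1.1.1.1.1 j.-1.
Definition zs (z : Alg R S C) j := vat z.1.1.1.1.2 j.-1.
Definition zy (z : Alg R S C) j i := mat z.1.1.1.2 j.-1 i.-1.
Definition zT (z : Alg R S C) j := vat z.1.1.2 j.-1.
Definition zxC (z : Alg R S C) j := vat z.1.2 j.-1.
Definition zL (z : Alg R S C) j := vat z.2 j.-1.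
Definition zx (z : Alg R S C) j i := if i == C then zxC z j else xh j i.
Definition zxr (z : Alg R S C) j := \row_(i < C) zx z j i.+1.

Definition aux' (z : Alg R S C) j :=
    if j == 1%N then
      (\sum_(i < C) (zL z 1 * (zx z 2 i.+1 - zx z 1 i.+1) - zV z 1 * (zy z 1 i.+1 - zx z 1 i.+1))) / nn 1
    else if j == S then
      (\sum_(i < C) (e * zV z S * (zx z S i.+1 - zy z S i.+1)
                      + zV z S.-1 * (zy z S.-1 i.+1 - zx z S i.+1))) / nn S
    else
      (\sum_(i < C) (zL z j * (zx z j.+1 i.+1 - zx z j i.+1) - zV z j * (zy z j i.+1 - zx z j i.+1)
                      + zV z j.-1 * (zy z j.-1 i.+1 - zx z j i.+1))) / nn j.

Definition G' (z : Alg R S C) : Eqs R S C :=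
  ( \row_(k < S) aux' z k.+1,
    \row_(k < S) (\sum_(i < C) zy z k.+1 i.+1 - 1 - zs z k.+1),
    \matrix_(k < S, i < C) (zy z k.+1 i.+1 - f_vle i.+1 (P0, zT z k.+1, zxr z k.+1)),
    \row_(k < S) (HH k.+1 - nn k.+1 * f_hl (zT z k.+1, zxr z k.+1)),
    \row_(k < S) (zx z k.+1 C - 1 + \sum_(i < C | (i < C.-1)%N) zx z k.+1 i.+1),
    \row_(k < S.-1) (nn k.+2 - f_holdup (zL z k.+1)) ).

Lemma G'1 z : (G' z).1.1.1.1.1 = \row_(k < S) aux' z k.+1. Proof. by []. Qed.
Lemma G'2 z : (G' z).1.1.1.1.2 = \row_(k < S) (\sum_(i < C) zy z k.+1 i.+1 - 1 - zs z k.+1).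
Proof. by []. Qed.
Lemma G'3 z : (G' z).1.1.1.2 =
    \matrix_(k < S, i < C) (zy z k.+1 i.+1 - f_vle i.+1 (P0, zT z k.+1, zxr z k.+1)).
Proof. by []. Qed.
Lemma G'4 z : (G' z).1.1.2 = \row_(k < S) (HH k.+1 - nn k.+1 * f_hl (zT z k.+1, zxr z k.+1)).
Proof. by []. Qed.
Lemma G'5 z : (G' z).1.2 = \row_(k < S) (zx z k.+1 C - 1 + \sum_(i < C | (i < C.-1)%N) zx z k.+1 i.+1).
Proof. by []. Qed.
Lemma G'6 z : (G' z).2 = \row_(k < S.-1) (nn k.+2 - f_holdup (zL z k.+1)).
Proof. by []. Qed.

Lemma derive1_ext (f g : R -> R) : f =1 g -> derive1 f 0 = derive1 g 0.
Proof. by move/funext => ->. Qed.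
Lemma G'1e z (k : 'I_S) : (G' z).1.1.1.1.1 ord0 k = aux' z k.+1.
Proof. by rewrite G'1 mxE. Qed.
Lemma G'2e z (k : 'I_S) : (G' z).1.1.1.1.2 ord0 k = \sum_(i < C) zy z k.+1 i.+1 - 1 - zs z k.+1.
Proof. by rewrite G'2 mxE. Qed.
Lemma G'3e z (k : 'I_S) (i : 'I_C) : (G' z).1.1.1.2 k i =
    zy z k.+1 i.+1 - f_vle i.+1 (P0, zT z k.+1, zxr z k.+1).
Proof. by rewrite G'3 mxE. Qed.
Lemma G'4e z (k : 'I_S) : (G' z).1.1.2 ord0 k = HH k.+1 - nn k.+1 * f_hl (zT z k.+1, zxr z k.+1).
Proof. by rewrite G'4 mxE. Qed.
Lemma G'5e z (k : 'I_S) : (G' z).1.2 ord0 k = zx z k.+1 C - 1 + \sum_(i < C | (i < C.-1)%N) zx z k.+1 i.+1.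
Proof. by rewrite G'5 mxE. Qed.
Lemma G'6e z (k : 'I_S.-1) : (G' z).2 ord0 k = nn k.+2 - f_holdup (zL z k.+1).
Proof. by rewrite G'6 mxE. Qed.
Lemma G'E : galg f_vle f_hl f_holdup nn xh HH e P0 = G'.
Proof. by apply: funext; case=> [[[[[Vv sv] ym] Tv] xCv] Lv]. Qed.


Lemma did (U : normedModType R) (p : U) : differentiable (fun z : U => z) p.
Proof. exact: ex_diff. Qed.

Lemma dvat (U : normedModType R) m (pi : U -> 'rV[R]_m) p j :
  differentiable pi p -> differentiable (fun z => vat (pi z) j) p.
Proof. move=> h; rewrite /vat; case: insub => [i|]; last exact: differentiable_cst.
exact: (dcoord ord0 i h).1. Qed.

Lemma dmat (U : normedModType R) m n (pi : U -> 'M[R]_(m, n)) p a b :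
  differentiable pi p -> differentiable (fun z => mat (pi z) a b) p.
Proof. move=> h; rewrite /mat; case: insub => [i|]; last exact: differentiable_cst.
case: insub => [j|]; last exact: differentiable_cst.
exact: (dcoord i j h).1. Qed.

Lemma vatE m (a : 'rV[R]_m) (k : 'I_m) : vat a k = a ord0 k.
Proof.
rewrite /vat; case: insubP => [u _ uk|]; last by rewrite ltn_ord.
by congr (a ord0 _); apply: val_inj.
Qed.
Lemma vat_out m (a : 'rV[R]_m) k : (m <= k)%N -> vat a k = 0.
Proof. by move=> h; rewrite /vat; case: insubP => // u; rewrite ltnNge h. Qed.
Lemma vat_all m (a : 'rV[R]_m) : (forall k : 'I_m, vat a k = 0) -> forall k, vat a k = 0.
Proof.
move=> h k; case: (ltnP k m) => [km|]; last exact: vat_out.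
exact: (h (Ordinal km)).
Qed.
Lemma matE m n (a : 'M[R]_(m, n)) (k : 'I_m) (l : 'I_n) : mat a k l = a k l.
Proof.
rewrite /mat; case: insubP => [u _ uk|]; last by rewrite ltn_ord.
case: insubP => [u' _ uk'|]; last by rewrite ltn_ord.
by congr (a _ _); apply: val_inj.
Qed.
Lemma mat_all m n (a : 'M[R]_(m, n)) :
  (forall (k : 'I_m) (l : 'I_n), mat a k l = 0) -> forall k l, mat a k l = 0.
Proof.
move=> h k l; rewrite /mat; case: insubP => [u _ uk|//]; case: insubP => [u' _ uk'|//].
by have := h u u'; rewrite matE.
Qed.
Lemma vat0 m k : vat (0 : 'rV[R]_m) k = 0.
Proof. by rewrite /vat; case: insub => [i|] //; rewrite mxE. Qed.
Lemma mat0 m n k l : mat (0 : 'M[R]_(m, n)) k l = 0.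
Proof. by rewrite /mat; case: insub => [i|] //; case: insub => [i'|] //; rewrite mxE. Qed.

Lemma alg_eq0 (v : Alg R S C) : v.1.1.1.1.1 = 0 -> v.1.1.1.1.2 = 0 -> v.1.1.1.2 = 0 ->
  v.1.1.2 = 0 -> v.1.2 = 0 -> v.2 = 0 -> v = 0.
Proof. by case: v => [[[[[a b] c] d] e'] f] /= -> -> -> -> -> ->. Qed.

Lemma eqs_eq0 (v : Eqs R S C) : v.1.1.1.1.1 = 0 -> v.1.1.1.1.2 = 0 -> v.1.1.1.2 = 0 ->
  v.1.1.2 = 0 -> v.1.2 = 0 -> v.2 = 0 -> v = 0.
Proof. by case: v => [[[[[a b] c] d] e'] f] /= -> -> -> -> -> ->. Qed.

Lemma bij_of_ker (G : Alg R S C -> Eqs R S C) p :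
  (forall v, 'd G p v = 0 -> v = 0) -> bijective ('d G p).
Proof.
move=> hk.
pose F : 'End(Alg R S C) := linfun ('d G p).
have FE : forall u, F u = 'd G p u by exact: lfunE.
have injF : injective F.
  move=> u w; rewrite !FE => E; apply/eqP; rewrite -subr_eq0; apply/eqP.
  by apply: hk; rewrite linearB /= E subrr.
have k0 : lker F == 0%VS by apply/lker0P.
exists (F^-1%VF) => u.
  by rewrite -FE lker0_lfunK.
by rewrite -[in LHS]FE lker0_lfunVK.
Qed.

Section Pt.
Variable p : Alg R S C.
Let d0 := did p.
Lemma dzV j : differentiable (fun z => zV z j) p.
Proof. apply: dvat. do 5 apply: (dfst _).1. exact: d0. Qed.
Lemma dzs j : differentiable (fun z => zs z j) p.
Proof. apply: dvat. apply: (dsnd _).1. do 4 apply: (dfst _).1. exact: d0. Qed.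
Lemma dzy j i : differentiable (fun z => zy z j i) p.
Proof. apply: dmat. apply: (dsnd _).1. do 3 apply: (dfst _).1. exact: d0. Qed.
Lemma dzT j : differentiable (fun z => zT z j) p.
Proof. apply: dvat. apply: (dsnd _).1. do 2 apply: (dfst _).1. exact: d0. Qed.
Lemma dzxC j : differentiable (fun z => zxC z j) p.
Proof. apply: dvat. apply: (dsnd _).1. do 1 apply: (dfst _).1. exact: d0. Qed.
Lemma dzL j : differentiable (fun z => zL z j) p.
Proof. apply: dvat. apply: (dsnd _).1. exact: d0. Qed.
Lemma dzx j i : differentiable (fun z => zx z j i) p.
Proof. rewrite /zx; case: (i == C); [exact: dzxC | exact: differentiable_cst]. Qed.

Lemma drow (U : normedModType R) n (g : U -> 'I_n -> R) (q : U) :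
  (forall k, differentiable (fun z => g z k) q) ->
  differentiable (fun z => \row_(k < n) g z k) q.
Proof.
move=> h; apply: dmx => i j.
have -> : (fun z => (\row_(k < n) g z k) i j) = (fun z => g z j).
  by apply: funext => z; rewrite mxE.
exact: h.
Qed.

Lemma dmatrix (U : normedModType R) m n (g : U -> 'I_m -> 'I_n -> R) (q : U) :
  (forall k l, differentiable (fun z => g z k l) q) ->
  differentiable (fun z => \matrix_(k < m, l < n) g z k l) q.
Proof.
move=> h; apply: dmx => i j.
have -> : (fun z => (\matrix_(k < m, l < n) g z k l) i j) = (fun z => g z i j).
  by apply: funext => z; rewrite mxE.
exact: h.
Qed.

Lemma dzxr j : differentiable (fun z => zxr z j) p.
Proof. apply: drow => k; exact: dzx. Qed.

Hypothesis hvle : forall i q, (1 <= i <= C)%N -> differentiable (f_vle i) q.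
Hypothesis hhl : forall q, differentiable f_hl q.
Hypothesis hhold : forall q, differentiable f_holdup q.

Lemma daux j : differentiable (fun z => aux' z j) p.
Proof.
rewrite /aux'; case: (j == 1%N); [|case: (j == S)];
  (apply: dmul; last exact: differentiable_cst); apply: dsum => i;
  repeat first [ apply: dsubR | apply: daddR | apply: dNR | apply: dmul | exact: differentiable_cst
               | exact: dzV | exact: dzx | exact: dzy | exact: dzL ].
Qed.

Lemma dG : differentiable G' p.
Proof.
rewrite /G'.
repeat apply: differentiable_pair.
- apply: drow => k; exact: daux.
- apply: drow => k; repeat apply: dsubR; [apply: dsum => i; exact: dzy|exact: differentiable_cst|exact: dzs].
- apply: dmatrix => k i; apply: dsubR; first exact: dzy.
  have -> : (fun z => f_vle i.+1 (P0, zT z k.+1, zxr z k.+1)) =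
     f_vle i.+1 \o (fun z => (P0, zT z k.+1, zxr z k.+1)) by [].
  apply: differentiable_comp; last by apply: hvle; rewrite /= ltn_ord.
  apply: differentiable_pair; [apply: differentiable_pair; [exact: differentiable_cst|exact: dzT] | exact: dzxr].
- apply: drow => k; apply: dsubR; first exact: differentiable_cst; apply: dmul; first exact: differentiable_cst.
  have -> : (fun z => f_hl (zT z k.+1, zxr z k.+1)) =
     f_hl \o (fun z => (zT z k.+1, zxr z k.+1)) by [].
  apply: differentiable_comp; last exact: hhl.
  apply: differentiable_pair; [exact: dzT | exact: dzxr].
- apply: drow => k; apply: daddR; first (apply: dsubR; [exact: dzx | exact: differentiable_cst]).
  by apply: dsumP => i _; exact: dzx.
- apply: drow => k; apply: dsubR; first exact: differentiable_cst.
  have -> : (fun z => f_holdup (zL z k.+1)) = f_holdup \o (fun z => zL z k.+1) by [].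
  apply: differentiable_comp; [exact: dzL | exact: hhold].
Qed.


Lemma DE1 v (k : 'I_S) :
  ('d G' p v).1.1.1.1.1 ord0 k = derive1 (fun h => aux' (h *: v + p) k.+1) 0.
Proof.
have [h1 e1] := dfst dG. have [h2 e2] := dfst h1. have [h3 e3] := dfst h2.
have [h4 e4] := dfst h3. have [h5 e5] := dfst h4. have [h6 e6] := dcoord ord0 k h5.
rewrite -e1 -e2 -e3 -e4 -e5 -e6 -deriveE // deriv_dir.
by apply: derive1_ext => h; exact: G'1e.
Qed.

Lemma DE2 v (k : 'I_S) :
  ('d G' p v).1.1.1.1.2 ord0 k =
  derive1 (fun h => \sum_(i < C) zy (h *: v + p) k.+1 i.+1 - 1 - zs (h *: v + p) k.+1) 0.
Proof.
have [h1 e1] := dfst dG. have [h2 e2] := dfst h1. have [h3 e3] := dfst h2.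
have [h4 e4] := dfst h3. have [h5 e5] := dsnd h4. have [h6 e6] := dcoord ord0 k h5.
rewrite -e1 -e2 -e3 -e4 -e5 -e6 -deriveE // deriv_dir.
by apply: derive1_ext => h; exact: G'2e.
Qed.

Lemma DE3 v (k : 'I_S) (i : 'I_C) :
  ('d G' p v).1.1.1.2 k i =
  derive1 (fun h => zy (h *: v + p) k.+1 i.+1
     - f_vle i.+1 (P0, zT (h *: v + p) k.+1, zxr (h *: v + p) k.+1)) 0.
Proof.
have [h1 e1] := dfst dG. have [h2 e2] := dfst h1. have [h3 e3] := dfst h2.
have [h5 e5] := dsnd h3. have [h6 e6] := dcoord k i h5.
rewrite -e1 -e2 -e3 -e5 -e6 -deriveE // deriv_dir.
by apply: derive1_ext => h; exact: G'3e.
Qed.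

Lemma DE4 v (k : 'I_S) :
  ('d G' p v).1.1.2 ord0 k =
  derive1 (fun h => HH k.+1 - nn k.+1 * f_hl (zT (h *: v + p) k.+1, zxr (h *: v + p) k.+1)) 0.
Proof.
have [h1 e1] := dfst dG. have [h2 e2] := dfst h1.
have [h5 e5] := dsnd h2. have [h6 e6] := dcoord ord0 k h5.
rewrite -e1 -e2 -e5 -e6 -deriveE // deriv_dir.
by apply: derive1_ext => h; exact: G'4e.
Qed.

Lemma DE5 v (k : 'I_S) :
  ('d G' p v).1.2 ord0 k =
  derive1 (fun h => zx (h *: v + p) k.+1 C - 1
      + \sum_(i < C | (i < C.-1)%N) zx (h *: v + p) k.+1 i.+1) 0.
Proof.
have [h1 e1] := dfst dG.
have [h5 e5] := dsnd h1. have [h6 e6] := dcoord ord0 k h5.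
rewrite -e1 -e5 -e6 -deriveE // deriv_dir.
by apply: derive1_ext => h; exact: G'5e.
Qed.

Lemma DE6 v (k : 'I_S.-1) :
  ('d G' p v).2 ord0 k =
  derive1 (fun h => nn k.+2 - f_holdup (zL (h *: v + p) k.+1)) 0.
Proof.
have [h5 e5] := dsnd dG. have [h6 e6] := dcoord ord0 k h5.
rewrite -e5 -e6 -deriveE // deriv_dir.
by apply: derive1_ext => h; exact: G'6e.
Qed.


Lemma vat_lin m (a b : 'rV[R]_m) h j : vat (h *: a + b) j = h * vat a j + vat b j.
Proof. by rewrite /vat; case: insub => [i|]; rewrite ?mxE // mulr0 addr0. Qed.
Lemma mat_lin m n (a b : 'M[R]_(m, n)) h j l : mat (h *: a + b) j l = h * mat a j l + mat b j l.
Proof. by rewrite /mat; case: insub => [i|]; [case: insub => [i'|]|]; rewrite ?mxE // mulr0 addr0. Qed.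

Lemma zV_lin (v : Alg R S C) h j : zV (h *: v + p) j = h * zV v j + zV p j.
Proof. exact: (vat_lin v.1.1.1.1.1 p.1.1.1.1.1 h j.-1). Qed.
Lemma zs_lin (v : Alg R S C) h j : zs (h *: v + p) j = h * zs v j + zs p j.
Proof. exact: (vat_lin v.1.1.1.1.2 p.1.1.1.1.2 h j.-1). Qed.
Lemma zy_lin (v : Alg R S C) h j i : zy (h *: v + p) j i = h * zy v j i + zy p j i.
Proof. exact: (mat_lin v.1.1.1.2 p.1.1.1.2 h j.-1 i.-1). Qed.
Lemma zT_lin (v : Alg R S C) h j : zT (h *: v + p) j = h * zT v j + zT p j.
Proof. exact: (vat_lin v.1.1.2 p.1.1.2 h j.-1). Qed.
Lemma zxC_lin (v : Alg R S C) h j : zxC (h *: v + p) j = h * zxC v j + zxC p j.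
Proof. exact: (vat_lin v.1.2 p.1.2 h j.-1). Qed.
Lemma zL_lin (v : Alg R S C) h j : zL (h *: v + p) j = h * zL v j + zL p j.
Proof. exact: (vat_lin v.2 p.2 h j.-1). Qed.
Lemma zx_lin0 (v : Alg R S C) h j i : zxC v j = 0 -> zx (h *: v + p) j i = zx p j i.
Proof. by move=> E; rewrite /zx; case: (i == C) => //; rewrite zxC_lin E mulr0 add0r. Qed.
Lemma zxr_lin0 (v : Alg R S C) h j : zxC v j = 0 -> zxr (h *: v + p) j = zxr p j.
Proof. by move=> E; apply/rowP => i; rewrite !mxE zx_lin0. Qed.

Lemma F1 v (k : 'I_S) : ('d G' p v).1.2 ord0 k = zxC v k.+1.
Proof.
rewrite DE5; apply: (derive1_affine (a := zxC p k.+1 - 1 +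
   \sum_(i < C | (i < C.-1)%N) zx p k.+1 i.+1)) => h.
rewrite {1 2}/zx eqxx zxC_lin.
rewrite (eq_bigr (fun i : 'I_C => zx p k.+1 i.+1)); first by ring.
move=> i hi; rewrite /zx; case: eqP => // E; exfalso.
by move: hi E; move: (nat_of_ord i) => m; lia.
Qed.

Lemma F2 v (k : 'I_S.-1) :
  ('d G' p v).2 ord0 k = - (zL v k.+1 * derive1 f_holdup (zL p k.+1)).
Proof.
rewrite DE6 (@derive1_ext _ (fun h => nn k.+2 - 1 * f_holdup (h * zL v k.+1 + zL p k.+1))).
  by rewrite (derive1_chain (nn k.+2) 1 (zL v k.+1) (hhold (zL p k.+1))); ring.
by move=> h; rewrite zL_lin mul1r.
Qed.

Lemma F3 v (k : 'I_S) : zxC v k.+1 = 0 ->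
  ('d G' p v).1.1.2 ord0 k =
  - nn k.+1 * (zT v k.+1 * derive1 (fun T' => f_hl (T', zxr p k.+1)) (zT p k.+1)).
Proof.
move=> E.
pose g := fun T' => f_hl (T', zxr p k.+1).
have dg : differentiable g (zT p k.+1).
  have -> : g = f_hl \o (fun T' => (T', zxr p k.+1)) by [].
  apply: differentiable_comp; last exact: hhl.
  apply: differentiable_pair; [exact: did | exact: differentiable_cst].
rewrite DE4 (@derive1_ext _ (fun h => HH k.+1 - nn k.+1 * g (h * zT v k.+1 + zT p k.+1))).
  by rewrite (derive1_chain (HH k.+1) (nn k.+1) (zT v k.+1) dg).
by move=> h; rewrite zT_lin zxr_lin0 // /g addrC.
Qed.

Lemma F4 v (k : 'I_S) (i : 'I_C) : zxC v k.+1 = 0 -> zT v k.+1 = 0 ->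
  ('d G' p v).1.1.1.2 k i = zy v k.+1 i.+1.
Proof.
move=> E1 E2; rewrite DE3.
apply: (derive1_affine (a := zy p k.+1 i.+1
     - f_vle i.+1 (P0, zT p k.+1, zxr p k.+1))) => h.
rewrite zy_lin zxr_lin0 // zT_lin E2 mulr0 add0r; ring.
Qed.

Lemma F5 v (k : 'I_S) :
  ('d G' p v).1.1.1.1.2 ord0 k = \sum_(i < C) zy v k.+1 i.+1 - zs v k.+1.
Proof.
rewrite DE2.
apply: (derive1_affine (a := \sum_(i < C) zy p k.+1 i.+1 - 1 - zs p k.+1)) => h.
rewrite zs_lin (eq_bigr (fun i : 'I_C => zy p k.+1 i.+1 + h * zy v k.+1 i.+1)); last first.
  by move=> i _; rewrite zy_lin addrC.
rewrite big_split /= -mulr_sumr; ring.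
Qed.


Definition auxlin (v : Alg R S C) j :=
  if j == 1%N then (- zV v 1 * \sum_(i < C) (zy p 1 i.+1 - zx p 1 i.+1)) / nn 1
  else if j == S then
    (e * zV v S * \sum_(i < C) (zx p S i.+1 - zy p S i.+1)
       + zV v S.-1 * \sum_(i < C) (zy p S.-1 i.+1 - zx p S i.+1)) / nn S
  else (- zV v j * \sum_(i < C) (zy p j i.+1 - zx p j i.+1)
       + zV v j.-1 * \sum_(i < C) (zy p j.-1 i.+1 - zx p j i.+1)) / nn j.

Lemma br1 m (A B : 'I_m -> R) (a V h n : R) :
  (\sum_(i < m) (A i - (h * a + V) * B i)) / n =
  (\sum_(i < m) (A i - V * B i)) / n + h * ((- a * \sum_(i < m) B i) / n).
Proof.
rewrite (eq_bigr (fun i => (A i - V * B i) + h * (- a * B i))); last by move=> i _; ring.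
rewrite big_split /= -mulr_sumr -mulr_sumr; ring.
Qed.

Lemma brS m (X Y : 'I_m -> R) (a b V W h n : R) :
  (\sum_(i < m) (e * (h * a + V) * X i + (h * b + W) * Y i)) / n =
  (\sum_(i < m) (e * V * X i + W * Y i)) / n
    + h * ((e * a * \sum_(i < m) X i + b * \sum_(i < m) Y i) / n).
Proof.
rewrite (eq_bigr (fun i => (e * V * X i + W * Y i) + h * (e * a * X i + b * Y i)));
  last by move=> i _; ring.
rewrite big_split /= -mulr_sumr.
set s0 := \sum_(i < m) (e * V * X i + W * Y i).
rewrite big_split /= -!mulr_sumr; ring.
Qed.

Lemma brM m (A B Y : 'I_m -> R) (a b V W h n : R) :
  (\sum_(i < m) (A i - (h * a + V) * B i + (h * b + W) * Y i)) / n =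
  (\sum_(i < m) (A i - V * B i + W * Y i)) / n
    + h * ((- a * \sum_(i < m) B i + b * \sum_(i < m) Y i) / n).
Proof.
rewrite (eq_bigr (fun i => (A i - V * B i + W * Y i) + h * (- a * B i + b * Y i)));
  last by move=> i _; ring.
rewrite big_split /= -mulr_sumr.
set s0 := \sum_(i < m) (A i - V * B i + W * Y i).
rewrite big_split /= -!mulr_sumr; ring.
Qed.

Lemma F6 v (k : 'I_S) :
  (forall j, zxC v j = 0) -> (forall j i, zy v j i = 0) -> (forall j, zL v j = 0) ->
  ('d G' p v).1.1.1.1.1 ord0 k = auxlin v k.+1.
Proof.
move=> E1 E2 E3; rewrite DE1; apply: (derive1_affine (a := aux' p k.+1)) => h.
have Ex j i : zx (h *: v + p) j i = zx p j i by exact: zx_lin0.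
have Ey j i : zy (h *: v + p) j i = zy p j i by rewrite zy_lin E2 mulr0 add0r.
have EL j : zL (h *: v + p) j = zL p j by rewrite zL_lin E3 mulr0 add0r.
rewrite /aux' /auxlin; case: (k.+1 == 1%N); [|case: (k.+1 == S)].
- under eq_bigr => i _ do rewrite !Ex !Ey !EL !zV_lin.
  exact: br1.
- under eq_bigr => i _ do rewrite !Ex !Ey !zV_lin.
  exact: brS.
- under eq_bigr => i _ do rewrite !Ex !Ey !EL !zV_lin.
  exact: brM.
Qed.


Hypothesis hS : (2 <= S)%N.
Hypothesis hn : forall j, (1 <= j <= S)%N -> nn j != 0.
Hypothesis he : e != 0.
Hypothesis hhl0 : forall j, (1 <= j <= S)%N ->
  derive1 (fun T' => f_hl (T', zxr p j)) (zT p j) != 0.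
Hypothesis hho0 : forall j, (1 <= j <= S.-1)%N -> derive1 f_holdup (zL p j) != 0.
Hypothesis hsy : forall j, (1 <= j <= S)%N -> \sum_(i < C) zy p j i.+1 = 1 + zs p j.
Hypothesis hsx : forall j, (1 <= j <= S)%N -> \sum_(i < C) zx p j i.+1 = 1.

Definition cc j := if j == S then e else 1.
Definition auxs (v : Alg R S C) j :=
  (- (cc j * zV v j * zs p j) + (if j == 1%N then 0 else zV v j.-1 * zs p j.-1)) / nn j.

Lemma cc_neq0 j : cc j != 0.
Proof. by rewrite /cc; case: (j == S) => //; rewrite oner_neq0. Qed.

Lemma auxlinE v j : (1 <= j <= S)%N -> auxlin v j = auxs v j.
Proof.
move=> /andP[j1 jS].
have sumD j' : (1 <= j' <= S)%N ->
    \sum_(i < C) (zy p j' i.+1 - zx p j' i.+1) = zs p j'.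
  by move=> hj; rewrite sumrB hsy // hsx //; ring.
rewrite /auxlin /auxs /cc; case: eqP => [E1|h1].
  rewrite E1 sumD; last by lia.
  case: eqP => [ES|_]; first by move: hS; rewrite -ES.
  ring.
have j2 : (2 <= j)%N by lia.
have hm : (1 <= j.-1 <= S)%N by lia.
have sumE : \sum_(i < C) (zy p j.-1 i.+1 - zx p j i.+1) = zs p j.-1.
  by rewrite sumrB hsy // hsx ?j1 //; ring.
case: eqP => [ES|hS'].
  rewrite -ES sumE.
  rewrite (eq_bigr (fun i : 'I_C => - (zy p j i.+1 - zx p j i.+1))); last by move=> i _; rewrite opprB.
  rewrite sumrN sumD ?j1 //; ring.
rewrite sumD ?j1 // sumE; ring.
Qed.

Lemma tri v : (forall k : 'I_S, auxs v k.+1 = 0) ->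
  (forall j, (1 <= j <= S)%N -> zs p j != 0) ->
  forall j, (1 <= j <= S)%N -> zV v j = 0.
Proof.
move=> hk hs; elim=> [//|j IH] /andP[_ jS].
have := hk (Ordinal jS); rewrite /auxs /= => /eqP.
rewrite mulf_eq0 invr_eq0 (negbTE (hn _)); last by rewrite jS.
rewrite orbF.
case: j IH jS => [|j] IH jS.
  rewrite /= addr0 oppr_eq0 !mulf_eq0 (negbTE (cc_neq0 _)) (negbTE (hs 1%N _)) //.
  by rewrite orbF /= => /eqP.
rewrite /= IH; last by rewrite /= ltnW.
rewrite mul0r addr0 oppr_eq0 !mulf_eq0 (negbTE (cc_neq0 _)) (negbTE (hs _ _)) ?jS //.
by rewrite orbF /= => /eqP.
Qed.

Lemma inj_part : (forall j, (1 <= j <= S)%N -> zs p j != 0) ->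
  forall v, 'd G' p v = 0 -> v = 0.
Proof.
move=> hs v Dv.
have c1 (k : 'I_S) : ('d G' p v).1.1.1.1.1 ord0 k = 0 by rewrite Dv /= mxE.
have c2 (k : 'I_S) : ('d G' p v).1.1.1.1.2 ord0 k = 0 by rewrite Dv /= mxE.
have c3 (k : 'I_S) (i : 'I_C) : ('d G' p v).1.1.1.2 k i = 0 by rewrite Dv /= mxE.
have c4 (k : 'I_S) : ('d G' p v).1.1.2 ord0 k = 0 by rewrite Dv /= mxE.
have c5 (k : 'I_S) : ('d G' p v).1.2 ord0 k = 0 by rewrite Dv /= mxE.
have c6 (k : 'I_S.-1) : ('d G' p v).2 ord0 k = 0 by rewrite Dv /= mxE.
have xC0 : forall j, zxC v j = 0.
  move=> j; apply: vat_all => k; by rewrite -(c5 k) F1.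
have L0 : forall j, zL v j = 0.
  move=> j; apply: vat_all => k; apply/eqP.
  have := c6 k; rewrite F2 => /eqP; rewrite oppr_eq0 mulf_eq0 (negbTE (hho0 _)) ?orbF //.
  by rewrite /= ltn_ord.
have T0 : forall j, zT v j = 0.
  move=> j; apply: vat_all => k; apply/eqP.
  have := c4 k; rewrite F3 // => /eqP.
  rewrite !mulf_eq0 oppr_eq0 (negbTE (hn _)) ?(negbTE (hhl0 _)) ?orbF //= ltn_ord.
have y0 : forall j i, zy v j i = 0.
  move=> j i; apply: mat_all => k l.
  have := c3 k l; rewrite F4 //.
have s0 : forall j, zs v j = 0.
  move=> j; apply: vat_all => k; apply/eqP.
  have := c2 k; rewrite F5 (eq_bigr (fun _ => 0)); last by move=> i _; exact: y0.
  by rewrite big1 // sub0r => /eqP; rewrite oppr_eq0.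
have HK : forall k' : 'I_S, auxs v k'.+1 = 0.
  by move=> k'; rewrite -auxlinE ?ltn_ord // -(c1 k') F6.
have V0 : forall j, zV v j = 0.
  move=> j; apply: vat_all => k.
  have hk : (1 <= k.+1 <= S)%N by rewrite ltn_ord.
  exact: (tri HK hs hk).
apply: alg_eq0; apply/rowP => k || apply/matrixP => k l; rewrite mxE.
- by rewrite -vatE; exact: (V0 k.+1).
- by rewrite -vatE; exact: (s0 k.+1).
- by rewrite -matE; exact: (y0 k.+1 l.+1).
- by rewrite -vatE; exact: (T0 k.+1).
- by rewrite -vatE; exact: (xC0 k.+1).
- by rewrite -vatE; exact: (L0 k.+1).
Qed.

Fixpoint Wf (j0 m : nat) : R :=
  match m with
  | 0 => 0
  | m'.+1 => if (m'.+1 < j0)%N then 0 else if m'.+1 == j0 then 1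
             else zs p m' * Wf j0 m' / (cc m'.+1 * zs p m'.+1)
  end.

Lemma W_lt j0 m : (m < j0)%N -> Wf j0 m = 0.
Proof. by case: m => [//|m] /= ->. Qed.
Lemma W_eq j0 : (1 <= j0)%N -> Wf j0 j0 = 1.
Proof. by case: j0 => [//|m] _ /=; rewrite ltnn eqxx. Qed.
Lemma W_gt j0 m : (j0 < m.+1)%N -> Wf j0 m.+1 = zs p m * Wf j0 m / (cc m.+1 * zs p m.+1).
Proof.
move=> h /=; rewrite ltnNge ltnW //=.
by have -> : (m.+1 == j0) = false by apply/eqP => E; rewrite E ltnn in h.
Qed.

Lemma noninj : (exists j, (1 <= j <= S)%N /\ zs p j = 0) ->
  exists v, v != 0 /\ 'd G' p v = 0.
Proof.
case=> j [hj sj].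
have exP : exists j, [&& (1 <= j)%N, (j <= S)%N & zs p j == 0].
  by exists j; move/andP: hj => [-> ->]; rewrite sj eqxx.
have bnd : forall j, [&& (1 <= j)%N, (j <= S)%N & zs p j == 0] -> (j <= S)%N.
  by move=> j' /and3P[].
case: (ex_maxnP exP bnd) => j0 /and3P[j01 j0S /eqP sj0] maxj.
pose w : 'rV[R]_S := \row_(k < S) Wf j0 k.+1.
pose v : Alg R S C := (w, 0, 0, 0, 0, 0).
have zVv : forall k : 'I_S, zV v k.+1 = Wf j0 k.+1.
  by move=> k; rewrite /zV /= vatE mxE.
have zVv' : forall j, (1 <= j <= S)%N -> zV v j = Wf j0 j.
  move=> [//|m] /andP[_ mS]; exact: (zVv (Ordinal mS)).
have sgt : forall j, (j0 < j)%N -> (j <= S)%N -> zs p j != 0.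
  move=> j' h1 h2; apply/negP => /eqP h3.
  have := maxj j'; rewrite h2 h3 eqxx andbT /= (leq_trans j01 (ltnW h1)) => /(_ isT).
  by rewrite leqNgt h1.
have xC0 : forall j, zxC v j = 0 by move=> ?; exact: vat0.
have y0 : forall j i, zy v j i = 0 by move=> ? ?; exact: mat0.
have L0 : forall j, zL v j = 0 by move=> ?; exact: vat0.
have T0 : forall j, zT v j = 0 by move=> ?; exact: vat0.
have s0 : forall j, zs v j = 0 by move=> ?; exact: vat0.
exists v; split.
  apply/eqP => v0; have := zVv' j0; rewrite j01 j0S W_eq // v0 /zV vat0 => /(_ isT).
  by move/esym/eqP; rewrite oner_eq0.
apply: eqs_eq0.
- apply/rowP => k; rewrite mxE F6 // auxlinE ?ltn_ord //.
  rewrite /auxs zVv.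
  case: (ltngtP k.+1 j0) => [hlt|hgt|heq].
  + rewrite W_lt // mulr0 mul0r oppr0 add0r.
    case: eqP => [_|h1]; first by rewrite mul0r.
    case: k hlt h1 zVv => [[|k] hk] //= hlt h1 zVv.
    by rewrite (zVv' k.+1) ?W_lt ?mul0r ?mul0r // ?(ltn_trans _ hlt) //; lia.
  + have k1 : (k.+1 == 1%N) = false by apply/eqP => E; move: hgt j01; rewrite E; lia.
    rewrite k1 W_gt //.
    case: k hgt k1 zVv => [[|k] hk] //= hgt k1 zVv.
    rewrite (zVv' k.+1); last by rewrite /= ltnW.
    have hsne := sgt k.+2 hgt hk.
    have hcc := cc_neq0 k.+2.
    rewrite -/(Wf j0 k.+1).
    field. by rewrite hsne hcc hn //=.
  + rewrite heq sj0 mulr0 oppr0 add0r.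
    case: eqP => [_|h1]; first by rewrite mul0r.
    have h2 : (1 < j0)%N by lia.
    rewrite (zVv' j0.-1); last by apply/andP; split; lia.
    by rewrite W_lt ?mul0r //; lia.
- apply/rowP => k; rewrite mxE F5 (eq_bigr (fun _ => 0)); last by move=> i _; exact: y0.
  by rewrite big1 // s0 subrr.
- apply/matrixP => k i; rewrite mxE F4 //.
- apply/rowP => k; rewrite mxE F3 // T0 mul0r mulr0 //.
- apply/rowP => k; rewrite mxE F1 //.
- apply/rowP => k; rewrite mxE F2 // L0 mul0r oppr0 //.
Qed.

Lemma bij_iff : bijective ('d G' p) <-> (forall j, (1 <= j <= S)%N -> zs p j != 0).
Proof.
split.
  move=> [g gK _] j hj; apply/negP => /eqP sj.
  have [v [vn0 Dv]] := noninj (ex_intro _ j (conj hj sj)).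
  have : v = 0.
    by rewrite -[v]gK Dv -[X in g X](linear0 ('d G' p)) gK.
  by move=> v0; move: vn0; rewrite v0 eqxx.
by move=> hs; apply: bij_of_ker; exact: inj_part.
Qed.
End Pt.
End Spec.

Local Open Scope classical_set_scope.
Local Open Scope ring_scope.


Lemma vat_row (R : realType) m (f : nat -> R) j : (j < m)%N -> vat (\row_(k < m) f k) j = f j.
Proof.
move=> h; rewrite /vat; case: insubP => [u _ uj|]; last by rewrite h.
by rewrite mxE uj.
Qed.

Lemma mat_mx (R : realType) m n (f : nat -> nat -> R) a b : (a < m)%N -> (b < n)%N ->
  mat (\matrix_(k < m, l < n) f k l) a b = f a b.
Proof.
move=> ha hb; rewrite /mat; case: insubP => [u _ ua|]; last by rewrite ha.
case: insubP => [u' _ ub|]; last by rewrite hb.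
by rewrite mxE ua ub.
Qed.

Lemma sum_split (R : realType) C (F : nat -> R) : (1 <= C)%N ->
  \sum_(i < C) F i.+1 = F C + \sum_(i < C | (i < C.-1)%N) F i.+1.
Proof.
case: C => [//|c] _ /=.
rewrite big_ord_recr /= [in RHS]big_mkcond big_ord_recr /= ltnn addr0 addrC.
by congr (_ + _); apply: eq_bigr => i _; rewrite ltn_ord.
Qed.

Theorem mainTheorem8 (R : realType) (S C : nat) (hS : (2 <= S)%N) (hC : (2 <= C)%N)
  (I : set R) (hI : is_interval I)
  (f_vle : nat -> (R * R * 'rV[R]_C)%type -> R)
  (f_hl f_hv : (R * 'rV[R]_C)%type -> R) (f_holdup : R -> R)
  (Hvle : forall i, (1 <= i <= C)%N -> C1 (f_vle i))
  (Hhl : C1 f_hl) (Hhv : C1 f_hv) (Hholdup : C1 f_holdup)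
  (eps P Q Tcond : R -> R)
  (Heps : C1_on I eps) (HP : C1_on I P) (HQ : C1_on I Q) (HTc : C1_on I Tcond)
  (n H T V s : nat -> R -> R) (x y : nat -> nat -> R -> R) (L : nat -> R -> R)
  (Hsol : solution_R S f_vle f_hl f_hv f_holdup I eps P Q Tcond n H T V s x y L)
  (Heps0 : forall t, I t -> eps t != 0)
  (Hn0 : forall t, I t -> forall j, (1 <= j <= S)%N -> n j t != 0)
  (Hhl0 : forall t, I t -> forall j, (1 <= j <= S)%N ->
     derive1 (fun T' => f_hl (T', \row_(i < C) x j i.+1 t)) (T j t) != 0)
  (Hhold0 : forall t, I t -> forall j, (1 <= j <= S.-1)%N ->
     derive1 f_holdup (L j t) != 0) :
  (forall t, I t ->
     bijective ('d (@galg R S C f_vle f_hl f_holdup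
                      (fun j => n j t) (fun j i => x j i t) (fun j => H j t)
                      (eps t) (P t))
                   (zeta_alg S C V s T L x y t)))
  <->
  (forall t, I t -> forall j, (1 <= j <= S)%N -> s j t != 0).
Proof.
have Hg : forall t, I t -> galg f_vle f_hl f_holdup (fun j => n j t) (fun j i => x j i t)
    (fun j => H j t) (eps t) (P t) (zeta_alg S C V s T L x y t) = 0.
  by move: Hsol => [_ [_ [_ [_ [_ [_ [_ [_ [_ [_ Hg]]]]]]]]]].
have key : forall t, I t ->
   (bijective ('d (@galg R S C f_vle f_hl f_holdup
                      (fun j => n j t) (fun j i => x j i t) (fun j => H j t)
                      (eps t) (P t))
                   (zeta_alg S C V s T L x y t))
    <-> (forall j, (1 <= j <= S)%N -> s j t != 0)).
  move=> t It.
  set p := zeta_alg S C V s T L x y t.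
  have Gp := Hg t It; rewrite G'E in Gp; rewrite G'E.
  have zsE : forall j, (1 <= j <= S)%N -> zs p j = s j t.
    by move=> [//|j] /andP[_ hj]; rewrite /zs /= (vat_row (fun k => s k.+1 t)).
  have zTE : forall j, (1 <= j <= S)%N -> zT p j = T j t.
    by move=> [//|j] /andP[_ hj]; rewrite /zT /= (vat_row (fun k => T k.+1 t)).
  have zLE : forall j, (1 <= j <= S.-1)%N -> zL p j = L j t.
    by move=> [//|j] /andP[_ hj]; rewrite /zL /= (vat_row (fun k => L k.+1 t)).
  have zyE : forall j i, (1 <= j <= S)%N -> (1 <= i <= C)%N -> zy p j i = y j i t.
    by move=> [//|j] [//|i] /andP[_ hj] /andP[_ hi]; rewrite /zy /= (mat_mx (fun k l => y k.+1 l.+1 t)).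
  have zxE : forall j i, (1 <= j <= S)%N -> zx (fun j i => x j i t) p j i = x j i t.
    move=> [//|j] i /andP[_ hj]; rewrite /zx; case: eqP => [->|//].
    by rewrite /zxC /= (vat_row (fun k => x k.+1 C t)).
  have zxrE : forall j, (1 <= j <= S)%N -> zxr (fun j i => x j i t) p j = \row_(i < C) x j i.+1 t.
    by move=> j hj; apply/rowP => i; rewrite !mxE zxE.
  rewrite (bij_iff (fun j => H j t) (P t)).
  - split=> h j hj; [rewrite -zsE // | rewrite zsE //]; exact: h.
  - by move=> i q hi; exact: (Hvle i hi).1.
  - exact: Hhl.1.
  - exact: Hholdup.1.
  - exact: hS.
  - exact: Hn0.
  - exact: Heps0.
  - by move=> j hj; rewrite zxrE // zTE //; exact: Hhl0.
  - by move=> j hj; rewrite zLE //; exact: Hhold0.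
  - move=> [//|j] /andP[_ hj].
    have := congr1 (fun w : Eqs R S C => w.1.1.1.1.2 ord0 (Ordinal hj)) Gp.
    rewrite /= ?mxE => E.
    have E' : \sum_(i < C) zy p j.+1 i.+1 - 1 - zs p j.+1 = 0 := E.
    lra.
  - move=> [//|j] /andP[_ hj].
    have := congr1 (fun w : Eqs R S C => w.1.2 ord0 (Ordinal hj)) Gp.
    rewrite /= ?mxE => E.
    have E' : zx (fun j i => x j i t) p j.+1 C - 1 +
       \sum_(i < C | (i < C.-1)%N) zx (fun j i => x j i t) p j.+1 i.+1 = 0 := E.
    rewrite (sum_split (fun i => zx (fun j i => x j i t) p j.+1 i)); last by lia.
    lra.
split.
  by move=> hb t It; apply/(key t It); exact: hb.
by move=> hs t It; apply/(key t It); exact: hs.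
Qed.
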